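(* Let $f:[a,b]\to\mathbb{R}$ be twice differentiable with $|f''|\leq M$ on $[a,b]$. For all $\alpha\in f'([a,b])$ and all $x\in[a,b]$ such that $\|x\alpha+f(a)-a\alpha\|>M(b-a)^2$, we have \[ \lfloor f(x)\rfloor=\lfloor x\alpha+f(a)-a\alpha\rfloor. \]
   Context: $\|y\|$ denotes the distance from $y$ to the nearest integer; $\lfloor\cdot\rfloor$ is the floor function. *)

(* Defs.v *)
From Stdlib Require Import Reals Lra.
Open Scope R_scope.

(* One-sided-aware derivative on [a,b]: f has derivative f' x at every
   x in [a,b], the limit of the difference quotient being taken within [a,b]
   (so at the endpoints it is the one-sided derivative). *)
Definition deriv_on (f f' : R -> R) (a b : R) : Prop :=
  forall x, a <= x <= b ->
    limit1_in (fun y => (f y - f x) / (y - x))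
              (fun y => a <= y <= b /\ y <> x) (f' x) x.

(* floor function: Stdlib's Int_part r = up r - 1 is the floor of r *)
Definition floorR (y : R) : Z := Int_part y.

Definition dist_int (y : R) : R :=
  Rmin (y - IZR (floorR y)) (IZR (floorR y) + 1 - y).

(* Main.v *)
Require Import Defs.
From Stdlib Require Import Reals Lra Lia ZArith.
Open Scope R_scope.

Definition clamp (a b y : R) : R := Rmax a (Rmin b y).

Lemma clamp_id a b y : a <= y <= b -> clamp a b y = y.
Proof. intros. unfold clamp, Rmax, Rmin. repeat destruct Rle_dec; lra. Qed.

Lemma clamp_in a b y : a <= b -> a <= clamp a b y <= b.
Proof. intros. unfold clamp, Rmax, Rmin. repeat destruct Rle_dec; lra. Qed.

Lemma clamp_dist a b x y : a <= x <= b -> Rabs (clamp a b y - x) <= Rabs (y - x).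
Proof.
  intros. unfold clamp, Rmax, Rmin. repeat destruct Rle_dec;
  unfold Rabs; repeat destruct Rcase_abs; lra.
Qed.

Lemma cont_clamp h h' a b x : a < b -> deriv_on h h' a b -> a <= x <= b ->
  continuity_pt (fun y => h (clamp a b y)) x.
Proof.
  intros Hab Hd Hx.
  unfold continuity_pt, continue_in, limit1_in, limit_in. simpl.
  intros eps Heps.
  destruct (Hd x Hx 1 Rlt_0_1) as [d1 [Hd1 H1]]. simpl in H1.
  set (L := Rabs (h' x) + 1).
  assert (HL : 0 < L) by (unfold L; pose proof (Rabs_pos (h' x)); lra).
  exists (Rmin d1 (eps / L)). split.
  { apply Rmin_pos; [lra| apply Rdiv_lt_0_compat; lra]. }
  intros y [_ Hy].
  rewrite (clamp_id a b x) by lra.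
  unfold R_dist in *.
  pose proof (clamp_dist a b x y Hx) as Hc.
  pose proof (clamp_in a b y (Rlt_le _ _ Hab)) as Hi.
  set (z := clamp a b y) in *.
  destruct (Req_dec z x) as [E|E].
  { rewrite E. unfold Rminus. rewrite Rplus_opp_r, Rabs_R0. lra. }
  assert (Hzz : Rabs (z - x) < Rmin d1 (eps / L)) by (eapply Rle_lt_trans; [exact Hc| exact Hy]).
  pose proof (Rmin_l d1 (eps/L)). pose proof (Rmin_r d1 (eps/L)).
  assert (Hzx : z - x <> 0) by lra.
  specialize (H1 z (conj (conj Hi E) (Rlt_le_trans _ _ _ Hzz H))). 
  unfold R_dist in H1.
  assert (Hq : Rabs ((h z - h x) / (z - x)) < L).
  { unfold L. pose proof (Rabs_triang_inv ((h z - h x) / (z - x)) (h' x)). lra. }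
  replace (h z - h x) with ((h z - h x) / (z - x) * (z - x)) by (field; auto).
  rewrite Rabs_mult.
  assert (Rabs (z - x) * L < eps).
  { assert (Rabs (z - x) < eps / L) by lra.
    apply (Rmult_lt_compat_r L) in H2; [|lra].
    unfold Rdiv in H2. rewrite Rmult_assoc, Rinv_l in H2; lra. }
  assert (0 <= Rabs (z - x)) by apply Rabs_pos.
  assert (Rabs ((h z - h x) / (z - x)) * Rabs (z - x) <= L * Rabs (z - x)).
  { apply Rmult_le_compat_r; lra. }
  lra.
Qed.

Lemma der_clamp h h' a b x : deriv_on h h' a b -> a < x < b ->
  derivable_pt_lim (fun y => h (clamp a b y)) x (h' x).
Proof.
  intros Hd Hx eps Heps.
  destruct (Hd x ltac:(lra) eps Heps) as [d1 [Hd1 H1]]. simpl in H1.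
  assert (Hp : 0 < Rmin d1 (Rmin (x - a) (b - x))).
  { apply Rmin_pos; [lra| apply Rmin_pos; lra]. }
  exists (mkposreal _ Hp). intros k Hk Hkd. simpl in Hkd.
  pose proof (Rmin_l d1 (Rmin (x - a) (b - x))).
  pose proof (Rmin_r d1 (Rmin (x - a) (b - x))).
  pose proof (Rmin_l (x - a) (b - x)). pose proof (Rmin_r (x - a) (b - x)).
  assert (Hk2 : Rabs k < x - a /\ Rabs k < b - x) by lra.
  assert (Hin : a <= x + k <= b).
  { revert Hk2. unfold Rabs. destruct Rcase_abs; lra. }
  rewrite (clamp_id a b (x + k)) by lra.
  rewrite (clamp_id a b x) by lra.
  assert (Hne : x + k <> x) by lra.
  assert (Hkk : R_dist (x + k) x < d1).
  { unfold R_dist. replace (x + k - x) with k by ring. lra. }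
  specialize (H1 (x + k) (conj (conj Hin Hne) Hkk)).
  unfold R_dist in H1. replace (x + k - x) with k in H1 by ring. exact H1.
Qed.

Lemma mvt_bound h h' a b beta K : a < b -> deriv_on h h' a b ->
  (forall t, a <= t <= b -> Rabs (h' t - beta) <= K) ->
  forall u v, a <= u -> u < v -> v <= b ->
  Rabs (h v - h u - beta * (v - u)) <= K * (v - u).
Proof.
  intros Hab Hd HK u v Hu Huv Hv.
  set (F := fun y => h (clamp a b y)).
  assert (pr1 : forall c, u < c < v -> derivable_pt F c).
  { intros c Hc. exists (h' c). apply der_clamp; auto; lra. }
  assert (pr2 : forall c, u < c < v -> derivable_pt id c).
  { intros. apply derivable_pt_id. }
  destruct (MVT F id u v pr1 pr2 Huv) as [c [P Hc]].
  { intros c Hc. apply (cont_clamp h h'); auto; lra. }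
  { intros. apply derivable_continuous_pt, derivable_pt_id. }
  assert (E1 : derive_pt id c (pr2 c P) = 1).
  { apply derive_pt_eq_0. apply derivable_pt_lim_id. }
  rewrite E1 in Hc.
  assert (E : derive_pt F c (pr1 c P) = h' c).
  { apply derive_pt_eq_0. apply der_clamp; auto; lra. }
  rewrite E in Hc. unfold id, F in Hc.
  rewrite (clamp_id a b u), (clamp_id a b v) in Hc by lra.
  replace (h v - h u - beta * (v - u)) with ((h' c - beta) * (v - u)) by lra.
  rewrite Rabs_mult, (Rabs_right (v - u)) by lra.
  apply Rmult_le_compat_r; [lra|]. apply HK; lra.
Qed.

Lemma floor_unique z r : IZR z <= r < IZR z + 1 -> Int_part r = z.
Proof.
  intros H. unfold Int_part.
  assert (z + 1 = up r)%Z.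
  { apply tech_up; rewrite plus_IZR; simpl; lra. }
  lia.
Qed.

Theorem lemma10 (f f1 f2 : R -> R) (a b M : R) :
  a < b ->
  deriv_on f f1 a b ->
  deriv_on f1 f2 a b ->
  (forall t, a <= t <= b -> Rabs (f2 t) <= M) ->
  forall alpha x : R,
    (exists c, a <= c <= b /\ f1 c = alpha) ->
    a <= x <= b ->
    dist_int (x * alpha + f a - a * alpha) > M * (b - a) ^ 2 ->
    floorR (f x) = floorR (x * alpha + f a - a * alpha).
Proof.
  intros Hab Hf Hf1 HM alpha x [c [Hc Hca]] Hx Hdist.
  assert (HM0 : 0 <= M).
  { pose proof (HM a ltac:(lra)). pose proof (Rabs_pos (f2 a)). lra. }
  assert (HMba : 0 <= M * (b - a)) by (apply Rmult_le_pos; lra).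
  assert (S1 : forall t, a <= t <= b -> Rabs (f1 t - alpha) <= M * (b - a)).
  { intros t Ht. subst alpha.
    destruct (Rtotal_order t c) as [H|[H|H]].
    - pose proof (mvt_bound f1 f2 a b 0 M Hab Hf1
        ltac:(intros; rewrite Rminus_0_r; auto) t c ltac:(lra) H ltac:(lra)).
      rewrite Rmult_0_l, Rminus_0_r in H0.
      rewrite <- Rabs_Ropp. replace (- (f1 t - f1 c)) with (f1 c - f1 t) by ring.
      apply Rle_trans with (M * (c - t)); auto.
      apply Rmult_le_compat_l; lra.
    - subst. unfold Rminus. rewrite Rplus_opp_r, Rabs_R0. lra.
    - pose proof (mvt_bound f1 f2 a b 0 M Hab Hf1
        ltac:(intros; rewrite Rminus_0_r; auto) c t ltac:(lra) H ltac:(lra)).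
      rewrite Rmult_0_l, Rminus_0_r in H0.
      apply Rle_trans with (M * (t - c)); auto.
      apply Rmult_le_compat_l; lra. }
  set (y := x * alpha + f a - a * alpha) in *.
  assert (S2 : Rabs (f x - y) <= M * (b - a) ^ 2).
  { destruct (Req_dec x a) as [E|E].
    - unfold y; subst x. replace (f a - (a * alpha + f a - a * alpha)) with 0 by ring.
      rewrite Rabs_R0. pose proof (pow2_ge_0 (b - a)).
      apply Rmult_le_pos; lra.
    - pose proof (mvt_bound f f1 a b alpha (M * (b - a)) Hab Hf S1 a x
        ltac:(lra) ltac:(lra) ltac:(lra)).
      unfold y. replace (f x - (x * alpha + f a - a * alpha))
        with (f x - f a - alpha * (x - a)) by ring.
      apply Rle_trans with (M * (b - a) * (x - a)); auto.
      replace (M * (b - a) ^ 2) with (M * (b - a) * (b - a)) by ring.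
      apply Rmult_le_compat_l; lra. }
  unfold dist_int in Hdist. unfold floorR in *.
  set (n := Int_part y) in *.
  pose proof (Rmin_l (y - IZR n) (IZR n + 1 - y)).
  pose proof (Rmin_r (y - IZR n) (IZR n + 1 - y)).
  apply floor_unique.
  revert S2. unfold Rabs. destruct Rcase_abs; intros; lra.
Qed.
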